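(* Let $N=\{1,\dots,n\}$ be a set of agents, $m>0$ a capacity, $\tau\ge 0$ and $g\ge 0$ fees, and for each $i\in N$ let $V_i:\mathbb{R}_+\to\mathbb{R}$ be strictly concave and differentiable with $V_i'(0)=\infty$ and $C_i:\mathbb{R}_+\to\mathbb{R}$ convex, differentiable and Lipschitz continuous. Let $U_i(x_i;\mu)=V_i(x_i)-C_i(x_i)-(\tau+\mu)x_i-g\,\mathbf{1}\{x_i>0\}$, $BR_i(\mu)=\arg\max_{x_i\ge 0}U_i(x_i;\mu)$ and $S(\mu)=\sum_{i=1}^nBR_i(\mu)$. If each $U_i$ is strictly concave in $x_i$, then the contract-clearing equilibrium $(\mathbf{x}^\star,\mu^\star)$ is unique.
   Context: A contract-clearing equilibrium is a pair $(\mathbf{x}^\star,\mu^\star)$ with $\mathbf{x}^\star\in\mathbb{R}_+^n$ and $\mu^\star\ge 0$ such that $x_i^\star=BR_i(\mu^\star)$ for all $i\in N$ and $S(\mu^\star)=\sum_i x_i^\star=m$. $\tau$ is a per-unit transaction fee, $g$ a fixed execution fee charged when $x_i>0$, and $\mu$ a shadow price enforcing capacity. *)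

(* Defs.v *)
From Stdlib Require Import Reals Lra.
From Coquelicot Require Import Coquelicot.
Open Scope R_scope.

(* Agents are indexed by 0, ..., n-1 (i.e. N = {1,...,n} shifted). *)
Fixpoint sum_agents (n : nat) (f : nat -> R) : R :=
  match n with
  | O => 0
  | S k => sum_agents k f + f k
  end.

Definition strictly_concave_Rplus (f : R -> R) : Prop :=
  forall x y t, 0 <= x -> 0 <= y -> x <> y -> 0 < t < 1 ->
    t * f x + (1 - t) * f y < f (t * x + (1 - t) * y).

Definition convex_Rplus (f : R -> R) : Prop :=
  forall x y t, 0 <= x -> 0 <= y -> 0 <= t <= 1 ->
    f (t * x + (1 - t) * y) <= t * f x + (1 - t) * f y.

Definition lipschitz_Rplus (f : R -> R) : Prop :=
  exists L, forall x y, 0 <= x -> 0 <= y -> Rabs (f x - f y) <= L * Rabs (x - y).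

Definition differentiable_Rplus (f : R -> R) : Prop :=
  (forall x, 0 < x -> ex_derive f x) /\
  (exists l : R, filterlim (fun h => (f h - f 0) / h) (at_right 0) (locally l)).

Definition ind_pos (x : R) : R := if Rlt_dec 0 x then 1 else 0.

Definition utility (V C : R -> R) (tau g mu x : R) : R :=
  V x - C x - (tau + mu) * x - g * ind_pos x.

Definition is_best_response (V C : R -> R) (tau g mu x : R) : Prop :=
  0 <= x /\ forall y, 0 <= y -> utility V C tau g mu y <= utility V C tau g mu x.

Definition contract_clearing_equilibrium (n : nat) (V C : nat -> R -> R)
    (tau g m : R) (x : nat -> R) (mu : R) : Prop :=
  0 <= mu /\
  (forall i, (i < n)%nat -> is_best_response (V i) (C i) tau g mu (x i)) /\
  sum_agents n x = m.

(* Main.v *)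
Require Import Defs.
From Stdlib Require Import Reals.
From Coquelicot Require Import Coquelicot.
Open Scope R_scope.
From Stdlib Require Import Lra Lia.

Lemma fermat (k : R -> R) (x c d : R) : 0 < x -> is_derive k x d ->
  (forall y, 0 < y -> y < 2 * x -> k y - c * y <= k x - c * x) -> d = c.
Proof.
  intros Hx Hd Hmax.
  set (f := fun y => k y - c * y).
  assert (Hf : is_derive f x (d - c * 1)).
  { unfold f. apply (is_derive_minus k (fun y => c * y) x d (c * 1)). exact Hd.
    apply (is_derive_scal (fun y => y) x c 1). apply (is_derive_id (K := R_AbsRing)). }
  apply is_derive_Reals in Hf.
  pose (pr := exist (fun l => derivable_pt_lim f x l) (d - c * 1) Hf : derivable_pt f x).
  assert (H0 : derive_pt f x pr = 0).
  { apply (deriv_maximum f 0 (2 * x) x pr); try lra.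
    intros y Hy1 Hy2. unfold f. apply Hmax; lra. }
  assert (H1 : derive_pt f x pr = d - c * 1) by (apply derive_pt_eq_0; exact Hf).
  lra.
Qed.

Lemma sum_ge (n : nat) (a b : nat -> R) :
  (forall i, (i < n)%nat -> b i <= a i) ->
  forall i, (i < n)%nat -> sum_agents n b + (a i - b i) <= sum_agents n a.
Proof.
  induction n as [|n IH]; intros Hab i Hi; [lia|].
  simpl.
  assert (Hmon : forall j, (j < n)%nat -> b j <= a j) by (intros; apply Hab; lia).
  assert (Hs : sum_agents n b <= sum_agents n a).
  { clear IH Hi i. induction n as [|n IH']; simpl. lra.
    assert (b n <= a n) by (apply Hmon; lia).
    assert (sum_agents n b <= sum_agents n a) by (apply IH'; intros; [apply Hab; lia| apply Hmon; lia]).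
    lra. }
  destruct (Nat.eq_dec i n) as [->|Hne].
  - lra.
  - assert (Hi' : (i < n)%nat) by lia.
    specialize (IH Hmon i Hi'). assert (b n <= a n) by (apply Hab; lia). lra.
Qed.

Lemma sum_pos (n : nat) (x : nat -> R) : 0 < sum_agents n x -> exists i, (i < n)%nat /\ 0 < x i.
Proof.
  induction n as [|n IH]; simpl; intros H. lra.
  destruct (Rlt_dec 0 (x n)) as [Hp|Hp]. exists n; split; [lia|lra].
  destruct IH as [i [Hi Hx]]. lra. exists i; split; [lia|lra].
Qed.

Lemma mono (V C : R -> R) tau g mu1 mu2 x1 x2 :
  is_best_response V C tau g mu1 x1 -> is_best_response V C tau g mu2 x2 ->
  mu1 < mu2 -> x2 <= x1.
Proof.
  intros [H1 B1] [H2 B2] Hlt.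
  specialize (B1 x2 H2). specialize (B2 x1 H1). unfold utility in *.
  nra.
Qed.

Lemma uniq_br (V C : R -> R) tau g mu x1 x2 :
  strictly_concave_Rplus (fun x => utility V C tau g mu x) ->
  is_best_response V C tau g mu x1 -> is_best_response V C tau g mu x2 -> x1 = x2.
Proof.
  intros Hc [H1 B1] [H2 B2].
  destruct (Req_dec x1 x2) as [e|ne]; auto. exfalso.
  specialize (Hc x1 x2 (/2) H1 H2 ne ltac:(lra)).
  assert (Hm : 0 <= /2 * x1 + (1 - /2) * x2) by lra.
  specialize (B1 _ Hm). specialize (B2 x1 H1). simpl in Hc. lra.
Qed.

Lemma br_deriv (V C : R -> R) tau g mu x :
  is_best_response V C tau g mu x -> 0 < x -> ex_derive V x -> ex_derive C x ->
  Derive V x - Derive C x = tau + mu.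
Proof.
  intros [Hx B] Hp HV HC.
  apply (fermat (fun y => V y - C y) x (tau + mu)); auto.
  - apply (is_derive_minus V C x); apply Derive_correct; auto.
  - intros y Hy _. specialize (B y (Rlt_le _ _ Hy)). unfold utility, ind_pos in B.
    destruct (Rlt_dec 0 y); destruct (Rlt_dec 0 x); lra.
Qed.


Theorem theorem4p7 (n : nat) (m tau g : R) (V C : nat -> R -> R)
  (Hn : (0 < n)%nat) (Hm : 0 < m) (Htau : 0 <= tau) (Hg : 0 <= g)
  (HVconc : forall i, (i < n)%nat -> strictly_concave_Rplus (V i))
  (HVdiff : forall i, (i < n)%nat -> forall x, 0 < x -> ex_derive (V i) x)
  (HVinada : forall i, (i < n)%nat ->
     filterlim (fun x => Derive (V i) x) (at_right 0) (Rbar_locally p_infty))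
  (HCconv : forall i, (i < n)%nat -> convex_Rplus (C i))
  (HCdiff : forall i, (i < n)%nat -> differentiable_Rplus (C i))
  (HClip : forall i, (i < n)%nat -> lipschitz_Rplus (C i))
  (HUconc : forall i, (i < n)%nat -> forall mu, 0 <= mu ->
     strictly_concave_Rplus (fun x => utility (V i) (C i) tau g mu x)) :
  forall (x1 x2 : nat -> R) (mu1 mu2 : R),
    contract_clearing_equilibrium n V C tau g m x1 mu1 ->
    contract_clearing_equilibrium n V C tau g m x2 mu2 ->
    mu1 = mu2 /\ (forall i, (i < n)%nat -> x1 i = x2 i).
Proof.
  intros x1 x2 mu1 mu2 [Hm1 [B1 S1]] [Hm2 [B2 S2]].
  assert (key : forall x1 x2 mu1 mu2, 0 <= mu1 -> 0 <= mu2 ->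
     (forall i, (i < n)%nat -> is_best_response (V i) (C i) tau g mu1 (x1 i)) ->
     sum_agents n x1 = m ->
     (forall i, (i < n)%nat -> is_best_response (V i) (C i) tau g mu2 (x2 i)) ->
     sum_agents n x2 = m -> ~ mu1 < mu2).
  { clear x1 x2 mu1 mu2 Hm1 B1 S1 Hm2 B2 S2.
    intros x1 x2 mu1 mu2 Hm1 Hm2 B1 S1 B2 S2 Hlt.
    assert (Hle : forall i, (i < n)%nat -> x2 i <= x1 i)
      by (intros i Hi; exact (mono _ _ _ _ _ _ _ _ (B1 i Hi) (B2 i Hi) Hlt)).
    destruct (sum_pos n x1 ltac:(lra)) as [i [Hi Hp]].
    assert (Heq : x1 i = x2 i).
    { pose proof (sum_ge n x1 x2 Hle i Hi). pose proof (Hle i Hi). lra. }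
    assert (HVd := HVdiff i Hi (x1 i) Hp).
    assert (HCd := proj1 (HCdiff i Hi) (x1 i) Hp).
    pose proof (br_deriv _ _ _ _ _ _ (B1 i Hi) Hp HVd HCd) as E1.
    rewrite Heq in HVd, HCd, Hp.
    pose proof (br_deriv _ _ _ _ _ _ (B2 i Hi) Hp HVd HCd) as E2.
    rewrite <- Heq in E2. lra. }
  assert (Hmu : mu1 = mu2).
  { destruct (Rtotal_order mu1 mu2) as [h|[h|h]]; auto; exfalso.
    - exact (key x1 x2 mu1 mu2 Hm1 Hm2 B1 S1 B2 S2 h).
    - exact (key x2 x1 mu2 mu1 Hm2 Hm1 B2 S2 B1 S1 h). }
  subst mu2. split; auto.
  intros i Hi. exact (uniq_br _ _ _ _ _ _ _ (HUconc i Hi mu1 Hm1) (B1 i Hi) (B2 i Hi)).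
Qed.
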